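(* Let $X$ be a geodesic $\delta$--hyperbolic space ($\delta\geqslant0$) on which a group $G$ acts by isometries, let $U\subset G$ be finite, let $x_0\in X$ satisfy $\frac1{|U|}\sum_{u\in U}|ux_0-x_0|\leqslant E(U)+\delta$, and let $d$ be either $1$ or $\log_2(2|U|)$. Let $y_0,z_0,y_1,z_1\in S(x_0,1000d\delta)$ with $|z_0-y_1|>6d\delta$ and $|y_0-z_1|>6d\delta$. Then for all $u_0\in U_{y_0,z_0}$ and $u_1\in U_{y_1,z_1}$, $$(u_0^{-1}x_0,u_1x_0)_{x_0}\leqslant1000d\delta\quad\text{and}\quad(u_0x_0,u_1^{-1}x_0)_{x_0}\leqslant1000d\delta.$$
   Context: Distance $|x-y|$; Gromov product $(p,q)_x=\frac12(|p-x|+|q-x|-|p-q|)$; $X$ is $\delta$--hyperbolic if $(p,r)_x\geqslant\min\{(p,q)_x,(q,r)_x\}-\delta$ for all $p,q,r,x$. $E(U):=\inf_{x\in X}\frac1{|U|}\sum_{u\in U}|ux-x|$. $S(x_0,R)$ is the sphere $\{x\mid|x-x_0|=R\}$. For $y,z\in S(x_0,1000d\delta)$, $U_{y,z}:=\{u\in U\mid |ux_0-x_0|\geqslant4000d\delta,\ (x_0,ux_0)_y\leqslant d\delta,\ (x_0,u^{-1}x_0)_z\leqslant d\delta\}$. *)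

(* Defs.v *)
From HB Require Import structures.
From mathcomp Require Import all_boot all_order all_algebra.
From mathcomp Require Import finmap.
From mathcomp Require Import all_classical all_reals all_analysis.

Set Implicit Arguments.
Unset Strict Implicit.
Unset Printing Implicit Defensive.

Import Order.TTheory GRing.Theory Num.Theory.
Local Open Scope ring_scope.
Local Open Scope classical_set_scope.


Section Defs.
Variables (R : realType) (X : Type).
Variable dist : X -> X -> R.

Definition is_metric : Prop :=
  (forall x y, dist x y = 0 <-> x = y) /\
  (forall x y, dist x y = dist y x) /\
  (forall x y z, dist x z <= dist x y + dist y z).

Definition geodesic_space : Prop :=
  forall x y : X, exists g : R -> X,
    g 0 = x /\ g (dist x y) = y /\
    forall s t, 0 <= s <= dist x y -> 0 <= t <= dist x y ->
      dist (g s) (g t) = `|s - t|.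

Definition gromov (p q x : X) : R :=
  (dist p x + dist q x - dist p q) / 2.

Definition hyperbolic (delta : R) : Prop :=
  forall p q r x : X,
    Num.min (gromov p q x) (gromov q r x) - delta <= gromov p r x.

Definition sphere (x0 : X) (r : R) : set X := [set x | dist x x0 = r].

Variable G : groupType.
Variable act : G -> X -> X.

Definition isometric_action : Prop :=
  (forall x, act 1%g x = x) /\
  (forall g h x, act (g * h)%g x = act g (act h x)) /\
  (forall g x y, dist (act g x) (act g y) = dist x y).

Definition avg_disp (U : {fset G}) (x : X) : R :=
  (\sum_(u <- U) dist (act u x) x) / ((#|` U|)%fset%:R).

Definition energy (U : {fset G}) : R := inf (range (avg_disp U)).

Definition U_yz (U : {fset G}) (x0 : X) (d delta : R) (y z : X) : set G :=
  [set u | u \in U /\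
           4000 * d * delta <= dist (act u x0) x0 /\
           gromov x0 (act u x0) y <= d * delta /\
           gromov x0 (act (u^-1)%g x0) z <= d * delta].

End Defs.

(* Main.v *)
Require Import Defs.
From HB Require Import structures.
From mathcomp Require Import all_boot all_order all_algebra.
From mathcomp Require Import finmap.
From mathcomp Require Import all_classical all_reals all_analysis.
From mathcomp Require Import lra.
Import Order.TTheory GRing.Theory Num.Theory.
Local Open Scope ring_scope.
Local Open Scope classical_set_scope.

Lemma key (R : realType) (X : Type) (dist : X -> X -> R) (delta D : R)
  (x a b p q : X) :
  is_metric dist -> 0 <= delta -> delta <= D -> hyperbolic dist delta ->
  dist p x = 1000 * D -> dist q x = 1000 * D ->
  6 * D < dist p q ->
  gromov dist x a p <= D -> gromov dist x b q <= D ->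
  gromov dist a b x <= 1000 * D.
Proof.
move=> [_ [sym _]] d0 dD hyp hp hq hpq ga gb.
have h1 := hyp p a b x. have h2 := hyp p b q x.
move: ga gb h1 h2; rewrite /gromov.
rewrite (sym x p) (sym x q) (sym a p) (sym b q) (sym x a) (sym x b).
rewrite hp hq.
move=> ga gb h1 h2.
rewrite leNgt; apply/negP => hab.
have e1 : (1000 * D + dist b x - dist p b)/2 >= 999 * D - delta.
  move: h1; rewrite lerBlDr ge_min => /orP [] h; lra.
move: h2; rewrite lerBlDr ge_min => /orP [] h; lra.
Qed.

Theorem lemma6p1 (R : realType) (X : Type) (dist : X -> X -> R)
  (delta : R) (G : groupType) (act : G -> X -> X)
  (U : {fset G}) (x0 : X) (d : R)
  (y0 z0 y1 z1 : X) (u0 u1 : G) :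
  is_metric dist -> geodesic_space dist -> 0 <= delta -> hyperbolic dist delta ->
  isometric_action dist act ->
  avg_disp dist act U x0 <= energy dist act U + delta ->
  (d = 1 \/ d = ln (2 * ((#|` U|)%fset%:R)) / ln 2) ->
  sphere dist x0 (1000 * d * delta) y0 ->
  sphere dist x0 (1000 * d * delta) z0 ->
  sphere dist x0 (1000 * d * delta) y1 ->
  sphere dist x0 (1000 * d * delta) z1 ->
  6 * d * delta < dist z0 y1 ->
  6 * d * delta < dist y0 z1 ->
  U_yz dist act U x0 d delta y0 z0 u0 ->
  U_yz dist act U x0 d delta y1 z1 u1 ->
  gromov dist (act (u0^-1)%g x0) (act u1 x0) x0 <= 1000 * d * delta /\
  gromov dist (act u0 x0) (act (u1^-1)%g x0) x0 <= 1000 * d * delta.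
Proof.
move=> met _ d0 hyp _ _ hd sy0 sz0 sy1 sz1 h1 h2
  [u0U [_ [g0y g0z]]] [_ [_ [g1y g1z]]].
have d1 : 1 <= d.
  case: hd => [->//|->].
  have n1 : (1 <= (#|` U|)%fset%:R :> R).
    rewrite ler1n cardfs_gt0; apply/fset0Pn; by exists u0.
  have l2 : 0 < ln (2 : R) by apply: ln_gt0; lra.
  rewrite lnM ?posrE; [|lra|lra].
  have := ln_ge0 n1 => hn.
  rewrite mulrDl divff ?gt_eqF //.
  have : 0 <= ln ((#|` U|)%fset%:R : R) / ln 2 by apply: divr_ge0; lra.
  lra.
have dD : delta <= d * delta by rewrite -{1}(mul1r delta); apply: ler_wpM2r.
rewrite /sphere /= in sy0 sz0 sy1 sz1.
split.
- rewrite -mulrA; apply: (@key _ _ _ _ _ x0 _ _ z0 y1 met d0 dD hyp).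
  + by rewrite mulrA.
  + by rewrite mulrA.
  + by rewrite mulrA.
  + exact: g0z.
  + exact: g1y.
- rewrite -mulrA; apply: (@key _ _ _ _ _ x0 _ _ y0 z1 met d0 dD hyp).
  + by rewrite mulrA.
  + by rewrite mulrA.
  + by rewrite mulrA.
  + exact: g0y.
  + exact: g1z.
Qed.
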